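(* Let $X_\Sigma$ be a projective toric variety and $D$ an $\mathbf R$-ample divisor on $X_\Sigma$. For each primitive collection $C$ let $\lambda_C\in\Lambda^D$ be the unique element with $\overline{S^{\chi_D}_{\lambda_C}}=V(x_\rho:\rho\in C)$. Then $$\{\mathbf 0\}=\bigcap_{\lambda\in\Lambda^D}\overline{S^{\chi_D}_\lambda}=\bigcap_{C\text{ primitive collection}}\overline{S^{\chi_D}_{\lambda_C}},$$ where $\mathbf 0$ is the origin of $\mathbf C^{\Sigma(1)}$.
   Context: $\Sigma$ complete fan with rays $\Sigma(1)$, generators $u_\rho$, divisors $D_\rho$; a primitive collection is $C\subset\Sigma(1)$ not contained in $\sigma(1)$ for any cone $\sigma$ while every proper subset is; $\mathbf C^{\Sigma(1)}=\mathrm{Spec}\,\mathbf C[x_\rho]$, $Z(\Sigma)=\bigcup_CV(x_\rho:\rho\in C)$. $\Gamma(G)=\{b\in\mathbf Z^{\Sigma(1)}:\sum b_\rho u_\rho=0\}$, $\langle\chi_D,b\rangle=\sum a_\rho b_\rho$ for $D=\sum a_\rho D_\rho$ (extended $\mathbf R$-linearly), $\Gamma(G)_{\mathbf R}\subset\mathbf R^{\Sigma(1)}$ with restricted standard norm. $\mathbf R$-ample divisors are elements of the ample cone in $\mathrm{Pic}(X_\Sigma)_{\mathbf R}$. For $x\in Z(\Sigma)$, $\sigma_x=\{v\in\Gamma(G)_{\mathbf R}:v_\rho\ge0\text{ whenever }x_\rho\ne0\}$; $v\mapsto\langle\chi_D,v\rangle/\|v\|$ attains its negative minimum $M^D(x)$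 on $\sigma_x\setminus\{0\}$ exactly on one ray, and $\lambda^D_x$ is the vector on it with $\|\lambda^D_x\|=-M^D(x)$. $\Lambda^D=\{\lambda^D_x:x\in Z(\Sigma)\}$, $S^{\chi_D}_\lambda=\{x\in Z(\Sigma):\lambda^D_x=\lambda\}$; for each primitive collection $C$ such a $\lambda_C$ exists and is unique. *)

(* Defs.v *)
From mathcomp Require Import all_boot all_order all_algebra.
From mathcomp Require Import Rstruct.
From mathcomp Require Import complex.
From mathcomp Require Import mpoly.
Set Implicit Arguments. Unset Strict Implicit. Unset Printing Implicit Defensive.
Import Order.TTheory GRing.Theory Num.Theory.
Local Open Scope ring_scope.

Notation R := Rdefinitions.R.
Definition CC : numClosedFieldType := R[i].

(* Fan data.  N = Z^d, rays Sigma(1) = 'I_n, u rho : 'I_d -> int is the     *)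
(* (primitive) generator u_rho.  A cone sigma of the fan is represented by   *)
(* its set of rays sigma(1) : {set 'I_n}; the fan is F : {set {set 'I_n}}.   *)
Section Fan.
Variables (d n : nat) (u : 'I_n -> 'I_d -> int).

Definition ucoord (rho : 'I_n) : 'I_d -> R := fun i => (u rho i)%:~R.

Definition dotd (m w : 'I_d -> R) : R := \sum_(i < d) m i * w i.

Definition in_cone (S : {set 'I_n}) (w : 'I_d -> R) : Prop :=
  exists c : 'I_n -> R, (forall rho, 0 <= c rho) /\
    (forall rho, rho \notin S -> c rho = 0) /\
    (forall i, w i = \sum_(rho < n) c rho * ucoord rho i).

Definition is_face (S : {set 'I_n}) (A : ('I_d -> R) -> Prop) : Prop :=
  exists m : 'I_d -> R, (forall w, in_cone S w -> 0 <= dotd m w) /\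
    (forall w, A w <-> (in_cone S w /\ dotd m w = 0)).

Definition primitive_vec (v : 'I_d -> int) : Prop :=
  (exists i, v i != 0) /\
  (forall k : int, 1 < k -> ~ (forall i, (k %| v i)%Z)).

(* F is a fan (of strongly convex rational polyhedral cones) whose rays are
   exactly the u_rho, and whose cones have ray sets sigma(1) = the elements
   of F *)
Definition is_fan (F : {set {set 'I_n}}) : Prop :=
  (forall rho, primitive_vec (u rho)) /\
  [/\ (forall rho, [set rho] \in F),
      (forall sigma, sigma \in F -> forall w,
          in_cone sigma w -> in_cone sigma (fun i => - w i) -> w = (fun _ => 0)),
      (forall sigma, sigma \in F -> forall rho,
          in_cone sigma (ucoord rho) -> rho \in sigma),
      (forall sigma, sigma \in F -> forall m : 'I_d -> R,
          (forall w, in_cone sigma w -> 0 <= dotd m w) ->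
          exists2 tau, tau \in F & forall w,
            in_cone tau w <-> (in_cone sigma w /\ dotd m w = 0)) &
      (forall sigma sigma', sigma \in F -> sigma' \in F ->
          is_face sigma (fun w => in_cone sigma w /\ in_cone sigma' w) /\
          is_face sigma' (fun w => in_cone sigma w /\ in_cone sigma' w))].

Definition complete_fan (F : {set {set 'I_n}}) : Prop :=
  forall w : 'I_d -> R, exists2 sigma, sigma \in F & in_cone sigma w.

Definition maximal_cone (F : {set {set 'I_n}}) (sigma : {set 'I_n}) : Prop :=
  sigma \in F /\ (forall tau, tau \in F -> sigma \subset tau -> tau = sigma).

(* D = sum_rho a_rho D_rho (real coefficients) is R-Cartier and ample:
   its support function is given by m_sigma on each maximal cone and is
   strictly convex (CLS, Thm 6.1.14 / Lemma 6.1.13). *)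
Definition ample (F : {set {set 'I_n}}) (a : 'I_n -> R) : Prop :=
  forall sigma, maximal_cone F sigma ->
    exists m : 'I_d -> R,
      (forall rho, rho \in sigma -> dotd m (ucoord rho) = - a rho) /\
      (forall rho, rho \notin sigma -> - a rho < dotd m (ucoord rho)).

Definition projective (F : {set {set 'I_n}}) : Prop :=
  exists a : 'I_n -> int, ample F (fun rho => (a rho)%:~R).

Definition primitive_collection (F : {set {set 'I_n}}) (C : {set 'I_n}) : Prop :=
  (forall sigma, sigma \in F -> ~~ (C \subset sigma)) /\
  (forall C' : {set 'I_n}, C' \proper C -> exists2 sigma, sigma \in F & C' \subset sigma).

Definition VC (C : {set 'I_n}) (x : 'I_n -> CC) : Prop :=
  forall rho, rho \in C -> x rho = 0.

Definition inZ (F : {set {set 'I_n}}) (x : 'I_n -> CC) : Prop :=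
  exists2 C, primitive_collection F C & VC C x.

Definition inGammaR (v : 'I_n -> R) : Prop :=
  forall i, \sum_(rho < n) v rho * ucoord rho i = 0.

Definition pairing (a v : 'I_n -> R) : R := \sum_(rho < n) a rho * v rho.

Definition normR (v : 'I_n -> R) : R := Num.sqrt (\sum_(rho < n) v rho ^+ 2).

Definition nonzero (v : 'I_n -> R) : Prop := exists rho, v rho != 0.

Definition sigma_x (x : 'I_n -> CC) (v : 'I_n -> R) : Prop :=
  inGammaR v /\ (forall rho, x rho != 0 -> 0 <= v rho).

Definition ratio (a v : 'I_n -> R) : R := pairing a v / normR v.

(* l = lambda^D_x : l lies on the unique ray of sigma_x \ {0} on which
   v |-> <chi_D, v>/||v|| attains its (negative) minimum M^D(x), and
   ||l|| = - M^D(x). *)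
Definition is_lambda (a : 'I_n -> R) (x : 'I_n -> CC) (l : 'I_n -> R) : Prop :=
  sigma_x x l /\
  [/\ nonzero l, ratio a l < 0,
      (forall v, sigma_x x v -> nonzero v -> ratio a l <= ratio a v),
      (forall v, sigma_x x v -> nonzero v -> ratio a v = ratio a l ->
          exists2 t : R, 0 < t & v = (fun rho => t * l rho)) &
      normR l = - ratio a l].

Definition LambdaD (F : {set {set 'I_n}}) (a : 'I_n -> R) (l : 'I_n -> R) : Prop :=
  exists2 x, inZ F x & is_lambda a x l.

Definition stratum (F : {set {set 'I_n}}) (a : 'I_n -> R) (l : 'I_n -> R)
  (x : 'I_n -> CC) : Prop :=
  inZ F x /\ is_lambda a x l.

End Fan.

Definition zclosure (n : nat) (S : ('I_n -> CC) -> Prop) (x : 'I_n -> CC) : Prop :=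
  forall p : {mpoly CC[n]}, (forall y, S y -> p.@[y] = 0) -> p.@[x] = 0.

Definition origin (n : nat) : 'I_n -> CC := fun _ => 0.
Arguments origin n : clear implicits.

(* Main.v *)
Require Import Defs.
From mathcomp Require Import all_boot all_order all_algebra.
From mathcomp Require Import Rstruct complex mpoly.
From mathcomp.algebra_tactics Require Import ring lra.
From Stdlib Require Import FunctionalExtensionality.
Import Order.TTheory GRing.Theory Num.Theory.
Local Open Scope ring_scope.

Section Lin.
Set Implicit Arguments. Unset Strict Implicit.
Variable n : nat.
Implicit Types x y v w b p g : 'I_n -> R.

Lemma pairingC x y : pairing x y = pairing y x.
Proof. by apply: eq_bigr => i _; rewrite mulrC. Qed.

Lemma pairing_lin x y z al be w :
  (forall i, z i = al * x i + be * y i) ->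
  pairing w z = al * pairing w x + be * pairing w y.
Proof.
move=> hz; rewrite /pairing !mulr_sumr -big_split /=.
by apply: eq_bigr => i _; rewrite hz; ring.
Qed.

Lemma pairing_linl x y z al be w :
  (forall i, z i = al * x i + be * y i) ->
  pairing z w = al * pairing x w + be * pairing y w.
Proof. by move=> hz; rewrite pairingC (pairing_lin _ hz) !(pairingC w). Qed.

Lemma pairing_ge0 x : 0 <= pairing x x.
Proof. by apply: sumr_ge0 => i _; rewrite -expr2 sqr_ge0. Qed.

Lemma pairing_eq0 x : pairing x x = 0 -> forall i, x i = 0.
Proof.
move=> h i.
have H : forall j : 'I_n, true -> 0 <= x j * x j by move=> j _; rewrite -expr2 sqr_ge0.
have /eqP := psumr_eq0P H h (i:=i) isT.
by rewrite mulf_eq0 orbb => /eqP.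
Qed.

Lemma pairing0 x w : (forall i, x i = 0) -> pairing x w = 0.
Proof. by move=> h; apply: big1 => i _; rewrite h mul0r. Qed.

Lemma pairing_expand x w y s :
  (forall i, y i = x i - s * w i) ->
  pairing y y = pairing x x - 2 * s * pairing x w + s ^+ 2 * pairing w w.
Proof.
move=> hy; rewrite /pairing !mulr_sumr -sumrN -!big_split /=.
by apply: eq_bigr => i _; rewrite hy; ring.
Qed.

Fixpoint allP0 (E : seq ('I_n -> R)) v : Prop :=
  if E is g :: E' then pairing g v = 0 /\ allP0 E' v else True.

Lemma allP0_lin E x y z al be :
  (forall i, z i = al * x i + be * y i) -> allP0 E x -> allP0 E y -> allP0 E z.
Proof.
move=> hz; elim: E => //= g E IH [h1 h2] [h3 h4]; split; last exact: IH.
by rewrite (pairing_lin _ hz) h1 h3; ring.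
Qed.

Lemma sub_proj E : forall b, exists p, allP0 E p /\
  forall v, allP0 E v -> pairing (fun i => b i - p i) v = 0.
Proof.
elim: E => [|g E IH] b.
  by exists b; split => // v _; apply: pairing0 => i; rewrite subrr.
have [p' [hp' op']] := IH b.
have [r [hr or]] := IH g.
have gv : forall v, allP0 E v -> pairing g v = pairing r v.
  move=> v hv; have := or v hv.
  rewrite (@pairing_linl g r _ 1 (-1)) => [|i]; last by ring.
  by move=> h; lra.
pose c := pairing r p' / pairing r r.
pose q := fun i => 1 * p' i + (- c) * r i.
have hq : allP0 E q by exact: allP0_lin hp' hr.
exists q; split => /=.
  split=> //; rewrite gv // (pairing_lin _ (fun i => erefl (q i))).
  have [r0|rn0] := eqVneq (pairing r r) 0.
    rewrite (pairing0 _ (pairing_eq0 r0)) (pairing0 _ (pairing_eq0 r0)); ring.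
  by rewrite /c mulNr divfK // mul1r subrr.
move=> v [gv0 hv].
rewrite (@pairing_linl (fun i => b i - p' i) r _ 1 c) => [|i]; last by rewrite /q; ring.
by rewrite op' // -gv // gv0; ring.
Qed.

Definition inK E (T : seq 'I_n) v := allP0 E v /\ (forall r, r \in T -> 0 <= v r).
Definition fdist b v := pairing (fun i => b i - v i) (fun i => b i - v i).

Lemma pairing_delta (r : 'I_n) v : pairing (fun i => (i == r)%:R) v = v r.
Proof.
rewrite /pairing (bigD1 r) //= eqxx mul1r big1 ?addr0 // => i /negbTE ->.
by rewrite mul0r.
Qed.

Lemma fdist_expand b p v t z :
  (forall i, z i = p i - t * (p i - v i)) ->
  fdist b z = fdist b p - 2 * t * pairing (fun i => b i - p i) (fun i => v i - p i)
      + t ^+ 2 * pairing (fun i => v i - p i) (fun i => v i - p i).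
Proof.
move=> hz; rewrite /fdist; apply: pairing_expand => i; rewrite hz; ring.
Qed.

Lemma cone_proj T : forall E b, exists p, inK E T p /\
  forall v, inK E T v -> fdist b p <= fdist b v.
Proof.
elim: T => [|r T IH] E b.
  have [p [hp op]] := sub_proj E b.
  exists p; split; first by split.
  move=> v [hv _].
  rewrite (@fdist_expand b p v 1 v) => [|i]; last by ring.
  rewrite (@pairing_lin v p _ 1 (-1)) => [|i]; last by ring.
  rewrite !op //; have := pairing_ge0 (fun i => v i - p i); lra.
have [p' [[hp'E hp'T] mp']] := IH E b.
have inKW : forall v, inK E (r :: T) v -> inK E T v.
  by move=> v [h1 h2]; split => // s hs; apply: h2; rewrite in_cons hs orbT.
case: (lerP 0 (p' r)) => hr.
  exists p'; split; last by move=> v /inKW; apply: mp'.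
  split => // s; rewrite in_cons => /orP [/eqP -> //|]; exact: hp'T.
have [q [[[qr hqE] hqT] mq]] := IH ((fun i => (i == r)%:R) :: E) b.
rewrite pairing_delta in qr.
exists q; split.
  split => // s; rewrite in_cons => /orP [/eqP -> |]; [by rewrite qr | exact: hqT].
move=> v hv; rewrite leNgt; apply/negP => hlt.
have [hvE hvT] := hv.
have vr : 0 <= v r by apply: hvT; rewrite in_cons eqxx.
have den : 0 < v r - p' r by lra.
pose t := - p' r / (v r - p' r).
have ht : t * (v r - p' r) = - p' r by rewrite /t divfK // gt_eqF.
have t0 : 0 < t by rewrite /t divr_gt0 // oppr_gt0.
have t1 : t <= 1 by rewrite /t ler_pdivrMr //; lra.
pose z := fun i => p' i - t * (p' i - v i).
have zK : inK ((fun i => (i == r)%:R) :: E) T z.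
  split; [split|].
  - rewrite pairing_delta /z; lra.
  - by apply: (@allP0_lin _ p' v z (1 - t) t) => // i; rewrite /z; ring.
  - move=> s hs; rewrite /z.
    have := hp'T s hs; have := hvT s (ltac:(by rewrite in_cons hs orbT)).
    nra.
have := mq z zK; have := mp' v (inKW v hv).
rewrite (@fdist_expand b p' v t z) // (@fdist_expand b p' v 1 v) => [|i]; last by ring.
have := pairing_ge0 (fun i => v i - p' i).
set A := fdist b p'; set B := pairing _ _; set C := pairing _ _.
move: hlt; rewrite (@fdist_expand b p' v 1 v) => [|i]; last by ring.
rewrite -/A -/B -/C => hlt hC h1 h2.
have h3 : 0 <= t * (1 - t) * B.
  apply: mulr_ge0 => //. apply: mulr_ge0; lra.
have h4 : 0 <= (1 - t) * (B - 2 * C) by apply: mulr_ge0; lra.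
nra.
Qed.

Lemma inK_comb E T x y z al be : 0 <= al -> 0 <= be ->
  (forall i, z i = al * x i + be * y i) -> inK E T x -> inK E T y -> inK E T z.
Proof.
move=> ha hb hz [hx1 hx2] [hy1 hy2]; split; first exact: allP0_lin hz hx1 hy1.
move=> s hs; rewrite hz; have := hx2 s hs; have := hy2 s hs; nra.
Qed.

Lemma var_ineq E T b p w : inK E T p -> (forall v, inK E T v -> fdist b p <= fdist b v) ->
  (forall s, 0 < s -> s <= 1 -> inK E T (fun i => p i + s * w i)) ->
  pairing (fun i => b i - p i) w <= 0.
Proof.
move=> hp mp hw; set c := pairing _ w.
rewrite leNgt; apply/negP => c0.
have N0 := pairing_ge0 w; set N := pairing w w in N0.
have Nc : 0 < N + c by lra.
pose s := c / (N + c).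
have hs : s * (N + c) = c by rewrite /s divfK // gt_eqF.
have s0 : 0 < s by rewrite /s divr_gt0.
have s1 : s <= 1 by rewrite /s ler_pdivrMr //; lra.
have := mp _ (hw s s0 s1).
rewrite /fdist (@pairing_expand (fun i => b i - p i) w (fun i => b i - (p i + s * w i)) s) => [|i]; last by ring.
rewrite -/c -/N => h.
have h2 : 0 <= s * (s * N - 2 * c) by nra.
have h3 : 0 <= s * N - 2 * c by rewrite -(pmulr_rge0 _ s0).
nra.
Qed.

Lemma proj_ineq E T b p : inK E T p -> (forall v, inK E T v -> fdist b p <= fdist b v) ->
  (forall v, inK E T v -> pairing (fun i => b i - p i) v <= 0) /\
  pairing (fun i => b i - p i) p = 0.
Proof.
move=> hp mp.
have h1 : forall v, inK E T v -> pairing (fun i => b i - p i) v <= 0.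
  move=> v hv; apply: (var_ineq hp mp) => s s0 s1.
  by apply: (@inK_comb _ _ p v _ 1 s) => //; try (move=> i /=; ring); lra.
split => //.
have h2 : pairing (fun i => b i - p i) (fun i => - p i) <= 0.
  apply: (var_ineq hp mp) => s s0 s1.
  by apply: (@inK_comb _ _ p p _ (1 - s) 0) => //; try (move=> i /=; ring); lra.
move: h2; rewrite (@pairing_lin p p _ (-1) 0) => [|i]; last by ring.
have := h1 p hp; lra.
Qed.

Lemma pairing_expand2 x y w al be :
  (forall i, w i = al * x i - be * y i) ->
  pairing w w = al ^+ 2 * pairing x x - 2 * al * be * pairing x y + be ^+ 2 * pairing y y.
Proof.
move=> hw; rewrite /pairing !mulr_sumr -sumrN -!big_split /=.
by apply: eq_bigr => i _; rewrite hw; ring.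
Qed.

Lemma normR_pairing v : normR v = Num.sqrt (pairing v v).
Proof. by rewrite /normR /pairing; congr Num.sqrt; apply: eq_bigr => i _; rewrite expr2. Qed.

Lemma nonzero_pos v : nonzero v -> 0 < pairing v v.
Proof.
move=> [r hr]; rewrite lt0r pairing_ge0 andbT; apply/eqP => /pairing_eq0 /(_ r).
by move/eqP; rewrite (negbTE hr).
Qed.

Lemma cauchy_schwarz p v : nonzero p -> nonzero v ->
  pairing p v <= Num.sqrt (pairing p p) * Num.sqrt (pairing v v) /\
  (pairing p v = Num.sqrt (pairing p p) * Num.sqrt (pairing v v) ->
     forall i, v i = Num.sqrt (pairing v v) / Num.sqrt (pairing p p) * p i).
Proof.
move=> /nonzero_pos hp /nonzero_pos hv.
set be := Num.sqrt (pairing p p); set al := Num.sqrt (pairing v v).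
have be0 : 0 < be by rewrite sqrtr_gt0.
have al0 : 0 < al by rewrite sqrtr_gt0.
have beE : be ^+ 2 = pairing p p by rewrite sqr_sqrtr // ltW.
have alE : al ^+ 2 = pairing v v by rewrite sqr_sqrtr // ltW.
pose w := fun i => al * p i - be * v i.
have hw := @pairing_expand2 p v w al be (fun i => erefl).
rewrite -beE -alE in hw.
have hw0 := pairing_ge0 w.
have key : pairing w w = 2 * (al * be) * (al * be - pairing p v) by rewrite hw; ring.
have ab0 : 0 < al * be by rewrite mulr_gt0.
split.
  rewrite mulrC; have : 0 <= 2 * (al * be) * (al * be - pairing p v) by rewrite -key.
  by rewrite pmulr_rge0 ?mulr_gt0 // subr_ge0.
move=> heq i.
have : pairing w w = 0 by rewrite key [al * be]mulrC -heq subrr mulr0.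
move/pairing_eq0/(_ i); rewrite /w => /eqP; rewrite subr_eq0 => /eqP h.
by rewrite mulrAC h mulrAC divff ?mul1r // gt_eqF.
Qed.

End Lin.

Section FanProofs.
Set Implicit Arguments. Unset Strict Implicit.
Variables (d n : nat) (u : 'I_n -> 'I_d -> int).

Lemma allP0_map (s : seq 'I_d) (f : 'I_d -> 'I_n -> R) v :
  allP0 (map f s) v <-> (forall i, i \in s -> pairing (f i) v = 0).
Proof.
elim: s => [|i s IH] /=; first by split.
split.
  move=> [h1 /IH h2] j; rewrite in_cons => /orP [/eqP -> //|]; exact: h2.
move=> h; split; first by apply: h; rewrite in_cons eqxx.
by apply/IH => j hj; apply: h; rewrite in_cons hj orbT.
Qed.

Definition Ed := [seq (fun rho => ucoord u rho i) | i <- enum 'I_d].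
Definition Tx (x : 'I_n -> CC) := [seq rho <- enum 'I_n | x rho != 0].

Lemma inK_sigma x v : inK Ed (Tx x) v <-> sigma_x u x v.
Proof.
split.
  move=> [/allP0_map h1 h2]; split.
    by move=> i; rewrite -[RHS](h1 i (mem_enum _ i)) pairingC.
  by move=> r hr; apply: h2; rewrite mem_filter hr mem_enum.
move=> [h1 h2]; split.
  by apply/allP0_map => i _; rewrite pairingC; exact: h1 i.
by move=> r; rewrite mem_filter => /andP [hr _]; apply: h2.
Qed.

Lemma lambda_exists (a : 'I_n -> R) (x : 'I_n -> CC) :
  (exists v0, sigma_x u x v0 /\ pairing a v0 < 0) -> exists l, is_lambda u a x l.
Proof.
move=> [v0 [hv0 av0]].
pose b := fun r => - a r.
have [p [hp mp]] := cone_proj (Tx x) Ed b.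
have [hin horth] := proj_ineq hp mp.
have psig : sigma_x u x p by apply/inK_sigma.
have hb : forall v, pairing b v = - pairing a v.
  move=> v; rewrite (@pairing_linl _ a a b (-1) 0 v) => [|i]; [ring | rewrite /b; ring].
have hbp : forall v, pairing (fun i => b i - p i) v = pairing b v - pairing p v.
  move=> v; rewrite (@pairing_linl _ b p _ 1 (-1) v) => [|i]; [ring | ring].
have pv0 : 0 < pairing p v0.
  have := hin v0 (proj2 (inK_sigma _ _) hv0); rewrite hbp hb; lra.
have pnz : nonzero p.
  case: (pickP (fun r => p r != 0)) => [r hr | h]; first by exists r.
  move: pv0; rewrite pairing0 ?ltxx // => r; apply/eqP; have := h r; by move/negbFE.
have hN := nonzero_pos pnz; set N := pairing p p in hN.
have hpa : pairing a p = - N.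
  by move: horth; rewrite hbp hb -/N; lra.
have sN : 0 < Num.sqrt N by rewrite sqrtr_gt0.
have rp : Defs.ratio a p = - Num.sqrt N.
  rewrite /Defs.ratio normR_pairing hpa -/N -{1}(sqr_sqrtr (ltW hN)) expr2 mulNr mulfK //.
  by rewrite gt_eqF.
exists p; split => //; split => //.
- by rewrite rp oppr_lt0.
- move=> v hv vnz; have [cs _] := cauchy_schwarz pnz vnz.
  have sM : 0 < Num.sqrt (pairing v v) by rewrite sqrtr_gt0 nonzero_pos.
  have := hin v (proj2 (inK_sigma _ _) hv); rewrite hbp hb => h.
  rewrite rp /Defs.ratio normR_pairing ler_pdivlMr //; move: cs; rewrite -/N; lra.
- move=> v hv vnz hr; have [cs ceq] := cauchy_schwarz pnz vnz.
  have sM : 0 < Num.sqrt (pairing v v) by rewrite sqrtr_gt0 nonzero_pos.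
  have := hin v (proj2 (inK_sigma _ _) hv); rewrite hbp hb => h.
  move: hr; rewrite rp /Defs.ratio normR_pairing => hr.
  have hr' : pairing a v = - Num.sqrt N * Num.sqrt (pairing v v).
    by rewrite -hr divfK // gt_eqF.
  have e : pairing p v = Num.sqrt N * Num.sqrt (pairing v v) by move: cs; rewrite -/N; lra.
  exists (Num.sqrt (pairing v v) / Num.sqrt N); first by rewrite divr_gt0.
  by apply: functional_extensionality => i; rewrite (ceq e i).
- by rewrite rp opprK normR_pairing.
Qed.

End FanProofs.

Section FanComb.
Set Implicit Arguments. Unset Strict Implicit.
Variables (d n : nat) (u : 'I_n -> 'I_d -> int) (F : {set {set 'I_n}}).

Lemma maximal_above sigma : sigma \in F ->
  exists2 s', maximal_cone F s' & sigma \subset s'.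
Proof.
move=> sF.
pose P := [pred t : {set 'I_n} | (t \in F) && (sigma \subset t)].
have Ps : P sigma by rewrite /P /= sF subxx.
case: (arg_maxnP (fun t : {set 'I_n} => #|t|) Ps) => t /andP [tF st] hmax.
exists t => //; split => // t' t'F tt'.
apply/eqP; rewrite eq_sym eqEcard tt' /=; apply: hmax.
by rewrite /P /= t'F (subset_trans st tt').
Qed.

Lemma sum_dotd (c : 'I_n -> R) (m : 'I_d -> R) :
  \sum_(r < n) c r * dotd m (ucoord u r) = dotd m (fun i => \sum_(r < n) c r * ucoord u r i).
Proof.
rewrite /dotd; under eq_bigr do rewrite mulr_sumr.
rewrite exchange_big /=; apply: eq_bigr => i _; rewrite mulr_sumr.
by apply: eq_bigr => r _; ring.
Qed.

Lemma key_nonneg (a : 'I_n -> R) sigma v : ample u F a -> maximal_cone F sigma ->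
  inGammaR u v -> (forall r, v r < 0 -> r \in sigma) -> 0 <= pairing a v.
Proof.
move=> am ms hv hneg; have [m [h1 h2]] := am sigma ms.
have z : \sum_(r < n) v r * dotd m (ucoord u r) = 0.
  rewrite sum_dotd /dotd big1 // => i _; by rewrite hv mulr0.
have : \sum_(r < n) v r * (- a r) <= \sum_(r < n) v r * dotd m (ucoord u r).
  apply: ler_sum => r _.
  case: (boolP (r \in sigma)) => rs; first by rewrite h1.
  have vr : 0 <= v r by rewrite leNgt; apply/negP => /hneg; rewrite (negbTE rs).
  by apply: ler_wpM2l => //; apply: ltW; apply: h2.
rewrite z /pairing.
have -> : \sum_(r < n) v r * - a r = - \sum_(r < n) a r * v r.
  by rewrite -sumrN; apply: eq_bigr => r _; ring.
lra.
Qed.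

End FanComb.

Section FanComb2.
Set Implicit Arguments. Unset Strict Implicit.
Variables (d n : nat) (u : 'I_n -> 'I_d -> int) (F : {set {set 'I_n}}).

Lemma prim_vec a C : complete_fan u F -> ample u F a -> primitive_collection F C ->
  exists v0, inGammaR u v0 /\ (forall r, r \notin C -> 0 <= v0 r) /\ pairing a v0 < 0.
Proof.
move=> cf am [pc1 _].
pose ind := fun r : 'I_n => (r \in C)%:R : R.
pose w := fun i => \sum_(r < n) ind r * ucoord u r i.
have [s sF [c [c0 [cs cw]]]] := cf w.
have [s' ms' ss'] := maximal_above sF.
have [m [h1 h2]] := am s' ms'.
have [r0 r0C r0s'] := subsetPn (pc1 s' (proj1 ms')).
exists (fun r => c r - ind r); split; [|split].
- move=> i.
  have -> : \sum_(r < n) (c r - ind r) * ucoord u r i =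
     \sum_(r < n) c r * ucoord u r i - \sum_(r < n) ind r * ucoord u r i.
    by rewrite -sumrB; apply: eq_bigr => r _; ring.
  by rewrite -cw /w subrr.
- by move=> r rC; rewrite /ind (negbTE rC) subr0; exact: c0.
have e1 : \sum_(r < n) a r * c r = - \sum_(r < n) c r * dotd m (ucoord u r).
  rewrite -sumrN; apply: eq_bigr => r _.
  case: (boolP (r \in s)) => rs; first by rewrite h1 ?(subsetP ss') //; ring.
  by rewrite cs //; ring.
have e2 : \sum_(r < n) c r * dotd m (ucoord u r) = \sum_(r < n) ind r * dotd m (ucoord u r).
  rewrite !sum_dotd; congr (dotd m); apply: functional_extensionality => i.
  by rewrite -cw.
have e3 : \sum_(r < n) a r * (c r - ind r) =
    \sum_(r < n) a r * c r - \sum_(r < n) ind r * a r.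
  by rewrite -sumrB; apply: eq_bigr => r _; ring.
have e4 : \sum_(r < n) ind r * (dotd m (ucoord u r) + a r) =
    \sum_(r < n) ind r * dotd m (ucoord u r) + \sum_(r < n) ind r * a r.
  by rewrite -big_split /=; apply: eq_bigr => r _; rewrite mulrDr.
have pos : 0 < \sum_(r < n) ind r * (dotd m (ucoord u r) + a r).
  rewrite (bigD1 r0) //=.
  have A : 0 <= \sum_(r < n | r != r0) ind r * (dotd m (ucoord u r) + a r).
    apply: sumr_ge0 => r _; apply: mulr_ge0; first by rewrite /ind ler0n.
    case: (boolP (r \in s')) => rs; first by rewrite h1 //; lra.
    by have := h2 r rs; lra.
  have B : 0 < ind r0 * (dotd m (ucoord u r0) + a r0).
    by rewrite /ind r0C mul1r; have := h2 r0 r0s'; lra.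
  lra.
rewrite /pairing e3; lra.
Qed.

Lemma exists_prim r : is_fan u F -> complete_fan u F ->
  exists C, primitive_collection F C /\ r \in C.
Proof.
move=> [pv [_ sconv _ _ _]] cf.
have [t tF [c [c0 [ct cw]]]] := cf (fun i => - ucoord u r i).
pose S := r |: t.
pose bad := fun S' : {set 'I_n} => [forall s in F, ~~ (S' \subset s)].
have badS : bad S.
  apply/forallP => s; apply/implyP => sF; apply/negP => Ss.
  have rs : r \in s by apply: (subsetP Ss); rewrite setU11.
  have ts : t \subset s by apply: subset_trans Ss; apply: subsetUr.
  have h1 : in_cone u s (ucoord u r).
    exists (fun r' => (r' == r)%:R); split; [|split].
    - by move=> r'; rewrite ler0n.
    - by move=> r' r's; case: eqP => // e; rewrite e rs in r's.
    - move=> i; rewrite (bigD1 r) //= eqxx mul1r big1 ?addr0 // => r' /negbTE ->.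
      by rewrite mul0r.
  have h2 : in_cone u s (fun i => - ucoord u r i).
    exists c; split; [done|split; [|done]].
    move=> r' r's; apply: ct; apply: contra r's; exact: (subsetP ts).
  have := sconv s sF _ h1 h2.
  have [[i hi] _] := pv r.
  move/(congr1 (fun f => f i)) => /= /eqP.
  by rewrite /ucoord intr_eq0 (negbTE hi).
pose P := fun S' : {set 'I_n} => (S' \subset S) && bad S'.
have PS : P S by rewrite /P subxx badS.
case: (arg_minnP (fun S' : {set 'I_n} => #|S'|) PS) => C /andP [CS badC] hmin.
exists C; split.
  split.
    move=> s sF; exact: (implyP (forallP badC s) sF).
  move=> C' pC'.
  have : ~~ bad C'.
    apply/negP => bC'.
    have := hmin C' (ltac:(by rewrite /P (subset_trans (proper_sub pC') CS) bC')).
    by rewrite leqNgt (proper_card pC').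
  rewrite negb_forall => /existsP [s]; rewrite negb_imply negbK => /andP [sF C's].
  by exists s.
apply/negPn/negP => rC.
have Ct : C \subset t.
  apply/subsetP => x xC; have := subsetP CS x xC; rewrite in_setU1 => /orP [/eqP e|//].
  by move: e xC => ->; rewrite (negbTE rC).
by move: (forallP badC t); rewrite tF Ct.
Qed.

Lemma key_neg a C l : ample u F a -> primitive_collection F C -> inGammaR u l ->
  (forall r, r \notin C -> 0 <= l r) -> pairing a l < 0 -> forall r, r \in C -> l r < 0.
Proof.
move=> am [pc1 pc2] hl hnn hneg.
pose N := [set r | l r < 0].
have NC : N \subset C.
  apply/subsetP => r; rewrite inE => lr; apply/negPn/negP => rC.
  by have := hnn r rC; lra.
have NeqC : N = C.
  apply/eqP; apply/negPn/negP => ne.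
  have pr : N \proper C by rewrite properEneq ne NC.
  have [s sF Ns] := pc2 N pr.
  have [s' ms' ss'] := maximal_above sF.
  have := key_nonneg am ms' hl (fun r lr => subsetP (subset_trans Ns ss') r
     (ltac:(by rewrite inE))).
  lra.
by move=> r; rewrite -NeqC inE.
Qed.

End FanComb2.

Section Scaling.
Variable n : nat.

Lemma origin_in_closure (S : ('I_n -> CC) -> Prop) y0 : S y0 ->
  (forall (t : CC) y, t != 0 -> S y -> S (fun i => t * y i)) -> zclosure S (origin n).
Proof.
move=> Sy0 hS p hp.
pose q : {poly CC} := \sum_(m <- msupp p)
   (p@_m * \prod_(i < n) y0 i ^+ m i) *: 'X^(\sum_(i < n) m i)%N.
have hq : forall t, q.[t] = p.@[fun i => t * y0 i].
  move=> t; rewrite mevalE /q horner_sum; apply: eq_bigr => m _.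
  rewrite hornerZ hornerXn -mulrA; congr (_ * _).
  under [RHS]eq_bigr do rewrite exprMn.
  by rewrite big_split /= prodrXr mulrC.
have q0 : q = 0.
  apply/eqP; apply/negPn/negP => qn0.
  pose rs := [seq (k.+1)%:R : CC | k <- iota 0 (size q)].
  have := @max_poly_roots _ q rs qn0.
  rewrite size_map size_iota ltnn => H; apply: notF; apply: H.
    apply/allP => z /mapP [k _ ->]; rewrite /root hq; apply/eqP; apply: hp.
    by apply: hS => //; rewrite pnatr_eq0.
  rewrite map_inj_uniq ?iota_uniq // => k1 k2 /eqP.
  by rewrite eqr_nat eqSS => /eqP.
have := hq 0; rewrite q0 horner0 => h.
rewrite /origin (@meval_eq _ _ _ (fun i => 0 * y0 i)) -?h // => i; by rewrite mul0r.
Qed.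

End Scaling.

Section Ext.
Variables (d n : nat) (u : 'I_n -> 'I_d -> int).

Lemma is_lambda_ext (a : 'I_n -> R) (x y : 'I_n -> CC) l :
  (forall r, (x r != 0) = (y r != 0)) -> is_lambda u a x l -> is_lambda u a y l.
Proof.
move=> e.
have se : forall v, sigma_x u x v <-> sigma_x u y v.
  by move=> v; split => -[h1 h2]; split => // r; [rewrite -e|rewrite e]; apply: h2.
move=> [sl [h1 h2 h3 h4 h5]]; split; first by apply/se.
split => //.
- by move=> v /se; apply: h3.
- by move=> v /se; apply: h4.
Qed.

End Ext.

Theorem corollary5p33 (d n : nat) (u : 'I_n -> 'I_d -> int)
    (F : {set {set 'I_n}}) (a : 'I_n -> R) :
  is_fan u F -> complete_fan u F -> projective u F -> ample u F a ->
  (forall x : 'I_n -> CC,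
     x = origin n <->
     (forall l, LambdaD u F a l -> zclosure (stratum u F a l) x)) /\
  (forall lamC : {set 'I_n} -> ('I_n -> R),
     (forall C, primitive_collection F C ->
        LambdaD u F a (lamC C) /\
        (forall x, zclosure (stratum u F a (lamC C)) x <-> VC C x)) ->
     forall x : 'I_n -> CC,
       x = origin n <->
       (forall C, primitive_collection F C -> zclosure (stratum u F a (lamC C)) x)).
Proof.
move=> hfan cf _ am.
have negl : forall r, exists l, LambdaD u F a l /\ l r < 0.
  move=> r; have [C [pC rC]] := exists_prim r hfan cf.
  pose xC := fun rho : 'I_n => if rho \in C then (0 : CC) else 1.
  have sigC : forall v, sigma_x u xC v <->
      inGammaR u v /\ (forall rho, rho \notin C -> 0 <= v rho).
    move=> v; split => [[h1 h2]|[h1 h2]]; split => // rho.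
    - by move=> rhoC; apply: h2; rewrite /xC (negbTE rhoC) oner_neq0.
    - by rewrite /xC; case: ifP => [_|hrho _]; [rewrite eqxx | apply: h2; rewrite hrho].
  have [v0 [g0 [n0 a0]]] := prim_vec cf am pC.
  have [l hl] : exists l, is_lambda u a xC l.
    by apply: lambda_exists; exists v0; split => //; apply/sigC.
  exists l; split.
    by exists xC => //; exists C => // rho rhoC; rewrite /xC rhoC.
  have [sl [_ rl _ _ _]] := hl.
  have [gl nl] := proj1 (sigC l) sl.
  apply: (key_neg am pC gl nl) => //.
  rewrite ltNge; apply/negP => h; move: rl; rewrite ltNge divr_ge0 //.
  exact: sqrtr_ge0.
have closed0 : forall l, LambdaD u F a l -> zclosure (stratum u F a l) (origin n).
  move=> l [x0 hx0 hl]; apply: (@origin_in_closure _ _ x0); first by split.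
  move=> t y t0 [[C pC VCy] hly]; split.
    by exists C => // rho rhoC; rewrite VCy ?mulr0.
  apply: is_lambda_ext hly => r.
  by rewrite mulf_eq0 negb_or t0.
split.
  move=> x; split; first by move=> -> l hl; apply: closed0.
  move=> H; apply: functional_extensionality => r.
  have [l [hl lr]] := negl r.
  have := H l hl ('X_r); rewrite mevalXU; apply => y [_ [[_ hy] _]].
  rewrite mevalXU; apply/eqP; apply/negPn/negP => yr.
  by have := hy r yr; rewrite leNgt lr.
move=> lamC hlam x; split.
  move=> -> C pC; apply/(proj2 (hlam C pC) (origin n)) => rho _; done.
move=> H; apply: functional_extensionality => r.
have [C [pC rC]] := exists_prim r hfan cf.
exact: (proj1 (proj2 (hlam C pC) x) (H C pC)).
Qed.
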